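(* Let $p,q$ be probability distributions on $\{1,\dots,n\}$ and let $\mathbf p(i,j)$ be a minimum-entropy coupling of $p$ and $q$. Consider the weighted undirected bipartite graph $G$ with vertex set $\{\ell_1,\dots,\ell_n,r_1,\dots,r_n\}$ and edge set $\{(\ell_i,r_j)$ with weight $\mathbf p(i,j) : \mathbf p(i,j)>0\}$. Then $G$ is a forest, and every edge of maximum weight has a leaf of this forest as one of its endpoints.
   Context: A coupling of $p$ and $q$ is a joint distribution $\mathbf p(i,j)\ge 0$ on $\{1,\dots,n\}^2$ with $\sum_j\mathbf p(i,j)=p(i)$ and $\sum_i \mathbf p(i,j)=q(j)$; a minimum-entropy coupling minimizes $\sum_{i,j}\mathbf p(i,j)\log_2(1/\mathbf p(i,j))$. *)

(* Defs.v *)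
From HB Require Import structures.
From mathcomp Require Import all_boot all_order all_algebra.
From mathcomp Require Import all_classical all_reals all_analysis.
Set Implicit Arguments. Unset Strict Implicit. Unset Printing Implicit Defensive.
Import Order.TTheory GRing.Theory Num.Theory.
Local Open Scope ring_scope.

(* probability distribution on {1..n} = 'I_n *)
Definition is_distr (R : realType) (n : nat) (p : 'I_n -> R) : Prop :=
  (forall i, 0 <= p i) /\ \sum_(i < n) p i = 1.

Definition is_coupling (R : realType) (n : nat) (p q : 'I_n -> R)
  (P : 'I_n -> 'I_n -> R) : Prop :=
  (forall i j, 0 <= P i j) /\
  (forall i, \sum_(j < n) P i j = p i) /\
  (forall j, \sum_(i < n) P i j = q j).

(* x log_2 (1/x), with the convention 0 log(1/0) = 0 *)
Definition ent_term (R : realType) (x : R) : R :=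
  if x == 0 then 0 else x * (ln (x^-1) / ln 2).

Definition entropy2 (R : realType) (n : nat) (P : 'I_n -> 'I_n -> R) : R :=
  \sum_(i < n) \sum_(j < n) ent_term (P i j).

Definition is_min_entropy_coupling (R : realType) (n : nat) (p q : 'I_n -> R)
  (P : 'I_n -> 'I_n -> R) : Prop :=
  is_coupling p q P /\
  forall Q, is_coupling p q Q -> entropy2 P <= entropy2 Q.

(* bipartite support graph: vertices inl i = l_i, inr j = r_j *)
Definition coupling_graph (R : realType) (n : nat) (P : 'I_n -> 'I_n -> R)
  : rel ('I_n + 'I_n) :=
  fun u v => match u, v with
             | inl i, inr j => 0 < P i j
             | inr j, inl i => 0 < P i j
             | _, _ => false
             end.

Definition is_forest (T : finType) (e : rel T) : Prop :=
  forall s : seq T, (3 <= size s)%N -> ~~ ucycleb e s.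

Definition is_leaf (T : finType) (e : rel T) (x : T) : Prop :=
  #|[set y | e x y]| = 1%N.

(* Main.v *)
Require Import Defs.
From HB Require Import structures.
From mathcomp Require Import all_boot all_order all_algebra.
From mathcomp Require Import all_classical all_reals all_analysis.
From mathcomp Require Import ring lra.
Import Order.TTheory GRing.Theory Num.Theory.
Set Implicit Arguments. Unset Strict Implicit.
Local Open Scope ring_scope.

Section RealLemmas.
Variable R : realType.
Implicit Types x y z : R.

Definition F x : R := x * ln x.

Lemma ln_lt_sub1 z : 0 < z -> z != 1 -> ln z < z - 1.
Proof.
move=> z0 z1.
have hz : ln z != 0 by rewrite ln_eq0.
have := expR_gt1Dx hz; rewrite lnK ?posrE //; lra.
Qed.

Lemma tangent_lt x y : 0 < y -> 0 <= x -> x != y ->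
  F y + (ln y + 1) * (x - y) < F x.
Proof.
move=> y0 x0 xy; rewrite /F.
have [->|xp] := eqVneq x 0.
  rewrite (ln0 (lexx (0:R))) mulr0; have -> : y * ln y + (ln y + 1) * (0 - y) = - y by ring.
  by rewrite oppr_lt0.
have xpos : 0 < x by rewrite lt_neqAle eq_sym xp.
have h := @ln_lt_sub1 _ (divr_gt0 y0 xpos).
have : y / x != 1.
  move: xy; apply: contra => /eqP e; apply/eqP; by rewrite -[y](divfK xp) e mul1r.
move=> /h; rewrite ln_div ?posrE // => h2.
have : x * (ln y - ln x) < x * (y / x - 1) by rewrite ltr_pM2l.
rewrite mulrBr mulrBr mulr1 mulrCA divff ?mulr1 //.
move=> h3; rewrite mulrDl mulrBr; lra.
Qed.

Lemma tangent_le x y : 0 < y -> 0 <= x ->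
  F y + (ln y + 1) * (x - y) <= F x.
Proof.
move=> y0 x0; have [->|xy] := eqVneq x y; first by rewrite subrr mulr0 addr0.
exact/ltW/tangent_lt.
Qed.

Lemma F_superadd x y : 0 <= x -> 0 <= y -> F x + F y <= F (x + y).
Proof.
move=> x0 y0; rewrite /F mulrDl.
have [->|xp] := eqVneq x 0; first by rewrite !mul0r !add0r.
have [->|yp] := eqVneq y 0; first by rewrite !mul0r !addr0.
have xpos : 0 < x by rewrite lt_neqAle eq_sym xp.
have ypos : 0 < y by rewrite lt_neqAle eq_sym yp.
apply: lerD; rewrite ler_pM2l // ler_ln ?posrE ?addr_gt0 //; lra.
Qed.

Lemma F_shift a b c : 0 < b -> b <= c -> c <= a ->
  F a + F c < F (a + b) + F (c - b).
Proof.
move=> b0 bc ca.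
have c0 : 0 < c by apply: lt_le_trans bc.
have a0 : 0 < a by apply: lt_le_trans ca.
have h1 := @tangent_le (a + b) a a0 (ltW (addr_gt0 a0 b0)).
have h2 : F c + (ln c + 1) * (c - b - c) < F (c - b).
  apply: tangent_lt => //; first lra.
  by rewrite -subr_eq0 addrAC subrr add0r oppr_eq0 gt_eqF.
have : ln c <= ln a by rewrite ler_ln ?posrE.
move=> hl.
have e1 : (a + b - a) = b by rewrite addrAC subrr add0r.
have e2 : (c - b - c) = - b by rewrite addrAC subrr add0r.
rewrite e1 in h1; rewrite e2 in h2.
nra.
Qed.

Lemma F_mid x t : 0 < x -> `|t| <= x -> t != 0 ->
  2 * F x < F (x + t) + F (x - t).
Proof.
move=> x0 tx t0.
have h1 : F x + (ln x + 1) * (x + t - x) < F (x + t).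
  apply: tangent_lt => //; first by move: tx; rewrite ler_norml; lra.
  by rewrite -subr_eq0 addrAC subrr add0r.
have h2 : F x + (ln x + 1) * (x - t - x) < F (x - t).
  apply: tangent_lt => //; first by move: tx; rewrite ler_norml; lra.
  by rewrite -subr_eq0 addrAC subrr add0r oppr_eq0.
have e1 : (x + t - x) = t by rewrite addrAC subrr add0r.
have e2 : (x - t - x) = - t by rewrite addrAC subrr add0r.
rewrite e1 in h1; rewrite e2 in h2; nra.
Qed.

Lemma ent_termE x : 0 <= x -> ent_term x = - F x / ln 2.
Proof.
move=> x0; rewrite /ent_term /F.
have [->|xp] := eqVneq x 0; first by rewrite mul0r oppr0 mul0r.
have xpos : 0 < x by rewrite lt_neqAle eq_sym xp.
by rewrite lnV ?posrE // !mulNr mulrN mulrA.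
Qed.

End RealLemmas.

Section Main.
Variables (R : realType) (n : nat) (p q : 'I_n -> R) (P : 'I_n -> 'I_n -> R).
Hypothesis Pmin : is_min_entropy_coupling p q P.

Local Notation e := (coupling_graph P).

Lemma Pge0 i j : 0 <= P i j.
Proof. by case: Pmin => [[h _] _]. Qed.

Definition SF (Q : 'I_n -> 'I_n -> R) := \sum_(x : 'I_n * 'I_n) F (Q x.1 x.2).

Lemma entropy2E (Q : 'I_n -> 'I_n -> R) : (forall i j, 0 <= Q i j) ->
  entropy2 Q = - SF Q / ln 2.
Proof.
move=> Q0; rewrite /entropy2 pair_big /= /SF mulNr mulr_suml -sumrN.
by apply: eq_bigr => x _; rewrite ent_termE // mulNr.
Qed.

Lemma SF_le Q : is_coupling p q Q -> SF Q <= SF P.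
Proof.
move=> cQ; case: Pmin => [[P0 _] /(_ Q cQ)].
have l2 : 0 < ln (2 : R) by apply: ln_gt0; rewrite ltr1n.
rewrite !entropy2E //; last by case: cQ.
by rewrite ler_pM2r ?invr_gt0 // lerN2.
Qed.

Lemma perturb_coupling (D : 'I_n -> 'I_n -> R) t :
  (forall i, \sum_(j < n) D i j = 0) -> (forall j, \sum_(i < n) D i j = 0) ->
  (forall i j, 0 <= P i j + t * D i j) ->
  is_coupling p q (fun i j => P i j + t * D i j).
Proof.
move=> hr hc h0; case: Pmin => [[_ [Pr Pc]] _].
split => //; split => i; rewrite big_split /= -mulr_sumr ?hr ?hc mulr0 addr0.
  exact: Pr.
exact: Pc.
Qed.

Lemma sum_ind1 (b : 'I_n) : \sum_(j < n) ((j == b)%:R : R) = 1.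
Proof.
rewrite (bigD1 b) //= eqxx big1 ?addr0 // => j /negbTE ->; done.
Qed.

Lemma sum4 (T : finType) (f : T -> R) x1 x2 x3 x4 :
  uniq [:: x1; x2; x3; x4] ->
  (forall x, x \notin [:: x1; x2; x3; x4] -> f x = 0) ->
  \sum_x f x = f x1 + f x2 + f x3 + f x4.
Proof.
move=> u f0; rewrite (bigID (fun x => x \in [:: x1; x2; x3; x4])) /=.
rewrite [X in _ + X]big1 ?addr0; last by move=> x; apply: f0.
rewrite -big_uniq // !big_cons big_nil /=.
rewrite -[LHS]/(f x1 + (f x2 + (f x3 + (f x4 + 0)))); ring.
Qed.

Definition mn (b c : R) := if b <= c then b else c.

Lemma leaf_ineq (a b c d : R) : 0 < b -> 0 < c -> b <= a -> c <= a -> 0 <= d ->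
  F a + F b + F c + F d <
  F (a + mn b c) + F (b - mn b c) + F (c - mn b c)
  + F (d + mn b c).
Proof.
move=> b0 c0 ba ca d0.
have F0 : F (0 : R) = 0 by rewrite /F mul0r.
rewrite /mn; case: ifP => [bc|/negbT]; last rewrite -ltNge => cb.
  rewrite subrr F0.
  have h1 := F_shift b0 bc ca.
  have h2 := F_superadd d0 (ltW b0).
  rewrite [d + b]addrC in h2 *; lra.
rewrite subrr F0.
have h1 := F_shift c0 (ltW cb) ba.
have h2 := F_superadd d0 (ltW c0).
lra.
Qed.

Lemma mn_le_l (a b : R) : mn a b <= a.
Proof. by rewrite /mn; case: ifP => // /negbT; rewrite -ltNge => /ltW. Qed.

Lemma mn_le_r (a b : R) : mn a b <= b.
Proof. by rewrite /mn; case: ifP. Qed.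

Lemma bigmn_le (T : eqType) (r : seq T) (f : T -> R) x : x \in r ->
  \big[mn/1]_(y <- r) f y <= f x.
Proof.
elim: r => // y r IH; rewrite inE big_cons => /orP [/eqP ->|xr].
  exact: mn_le_l.
exact: le_trans (mn_le_r _ _) (IH xr).
Qed.

Lemma bR (b : bool) : (b%:R : R) = if b then 1 else 0.
Proof. by case: b. Qed.

Definition ind (x y : 'I_n * 'I_n) : R := (x == y)%:R.

Lemma indE (i' j' a b : 'I_n) : ind (i', j') (a, b) = (i' == a)%:R * (j' == b)%:R.
Proof. by rewrite /ind xpair_eqE -natrM mulnb. Qed.

Lemma leaf_contra i j k m : k != j -> m != i -> 0 < P i k -> 0 < P m j ->
  (forall i' j', P i' j' <= P i j) -> False.
Proof.
move=> kj mi hb hc hmax.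
have jk : j != k by rewrite eq_sym.
have im : i != m by rewrite eq_sym.
set del := mn (P i k) (P m j).
have d0 : 0 < del by rewrite /del /mn; case: ifP => _; [exact: hb | exact: hc].
have db : del <= P i k by rewrite /del /mn; case: ifP => [_|/negbT]; rewrite ?lexx // -ltNge => /ltW.
have dc : del <= P m j by rewrite /del /mn; case: ifP => [h|_]; rewrite ?lexx.
pose S i' j' := ind (i', j') (i, j) - ind (i', j') (i, k) - ind (i', j') (m, j)
   + ind (i', j') (m, k).
have hr : forall i', \sum_(j' < n) S i' j' = 0.
  move=> i'; rewrite /S; under eq_bigr do rewrite !indE.
  rewrite !(big_split, sumrN) /= -!mulr_sumr !sum_ind1; ring.
have hc' : forall j', \sum_(i' < n) S i' j' = 0.
  move=> j'; rewrite /S; under eq_bigr do rewrite !indE.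
  rewrite !(big_split, sumrN) /= -!mulr_suml !sum_ind1; ring.
have h0 : forall i' j', 0 <= P i' j' + del * S i' j'.
  move=> i' j'; rewrite /S !indE !bR.
  have := Pge0 i' j'.
  have [->|n1] := eqVneq i' i.
    rewrite ?eqxx (negbTE im) /=.
    have [->|n2] := eqVneq j' j.
      rewrite ?eqxx (negbTE jk) /=; lra.
    rewrite /=.
    have [->|n3] := eqVneq j' k.
      rewrite ?eqxx /=; lra.
    rewrite /=; lra.
  rewrite /=.
  have [->|n4] := eqVneq i' m.
    rewrite ?eqxx /=.
    have [->|n2] := eqVneq j' j.
      rewrite ?eqxx (negbTE jk) /=; lra.
    rewrite /=.
    have [->|n3] := eqVneq j' k.
      rewrite ?eqxx /=; lra.
    rewrite /=; lra.
  rewrite /=; lra.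
have cQ := perturb_coupling hr hc' h0.
have := SF_le cQ.
rewrite /SF -subr_le0 -sumrB.
rewrite (@sum4 _ _ (i, j) (i, k) (m, j) (m, k)); first last.
- case=> i' j'; rewrite !inE !negb_or !xpair_eqE /= => h.
  have -> : S i' j' = 0.
    rewrite /S !indE.
    move: h; case: (i' == i); case: (i' == m); case: (j' == j); case: (j' == k);
      rewrite /= ?mulr0 ?mul0r ?mulr1 ?mul1r; move=> //; lra.
  by rewrite mulr0 addr0 subrr.
  by rewrite /= !inE !xpair_eqE !eqxx ?(negbTE jk) ?(negbTE kj) ?(negbTE im) ?(negbTE mi).
rewrite /S /= !indE !bR !eqxx ?(negbTE jk) ?(negbTE kj) ?(negbTE im) ?(negbTE mi) /=.
have := @leaf_ineq (P i j) (P i k) (P m j) (P m k) hb hc (hmax _ _) (hmax _ _) (Pge0 _ _).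
rewrite -/del.
have -> : del * (1 * 1 - 1 * 0 - 0 * 1 + 0 * 0) = del by ring.
have -> : del * (1 * 0 - 1 * 1 - 0 * 0 + 0 * 1) = - del by ring.
have -> : del * (0 * 1 - 0 * 0 - 1 * 1 + 1 * 0) = - del by ring.
have -> : del * (0 * 0 - 0 * 1 - 1 * 0 + 1 * 1) = del by ring.
lra.
Qed.

Definition isL (v : 'I_n + 'I_n) : R := if v is inl _ then 1 else 0.
Definition isR (v : 'I_n + 'I_n) : R := if v is inr _ then 1 else 0.

Lemma sum_inr (v : 'I_n + 'I_n) : \sum_(j < n) ((v == inr j)%:R : R) = isR v.
Proof.
case: v => [i0|j0] /=; first by rewrite big1.
rewrite (bigD1 j0) //= eqxx big1 ?addr0 // => j hj.
by have -> : (inr j0 == inr j :> 'I_n + 'I_n) = false by apply/eqP => [[]] /eqP; rewrite eq_sym (negbTE hj).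
Qed.

Lemma sum_inl (v : 'I_n + 'I_n) : \sum_(i < n) ((v == inl i)%:R : R) = isL v.
Proof.
case: v => [i0|j0] /=; last by rewrite big1.
rewrite (bigD1 i0) //= eqxx big1 ?addr0 // => j hj.
by have -> : (inl i0 == inl j :> 'I_n + 'I_n) = false by apply/eqP => [[]] /eqP; rewrite eq_sym (negbTE hj).
Qed.

Lemma sum_next (s : seq ('I_n + 'I_n)) (x : 'I_n + 'I_n) : uniq s ->
  \sum_(u <- s) ((next s u == x)%:R : R) = \sum_(u <- s) ((u == x)%:R : R).
Proof.
move=> us.
rewrite -(big_map (next s) xpredT (fun v => ((v == x)%:R : R))).
apply: perm_big; apply: uniq_perm => //.
  by rewrite map_inj_uniq //; apply: (can_inj (prev_next us)).
by move=> y; apply/mapP/idP => [[z zs ->]|ys]; [rewrite mem_next | exists (prev s y); rewrite ?mem_prev ?next_prev].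
Qed.

Lemma forest_contra s : (3 <= size s)%N -> cycle e s -> uniq s -> False.
Proof.
move=> s3 cyc us.
have [x0 [x1 [x2 [r Es]]]] : exists x0 x1 x2 r, s = [:: x0, x1, x2 & r].
  move: s3; case: s {cyc us} => [|y0 [|y1 [|y2 r]]] //= _; by exists y0, y1, y2, r.
pose nx := next s.
pose D i j := \sum_(u <- s) ((u == inl i)%:R * (nx u == inr j)%:R
                             - (u == inr j)%:R * (nx u == inl i)%:R : R).
have hr : forall i, \sum_(j < n) D i j = 0.
  move=> i; rewrite /D exchange_big /=.
  rewrite (eq_big_seq (fun u => (u == inl i)%:R - (nx u == inl i)%:R)).
    by rewrite sumrB sum_next // subrr.
  move=> u us'; rewrite sumrB -mulr_sumr -mulr_suml !sum_inr.
  have h := next_cycle cyc us'.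
  congr (_ - _).
    case: u h {us'} => [i0|j0] h; last by rewrite /= mul0r.
    by move: h; rewrite /isR /nx; case: (next s (inl i0)) => [a1|b1] //= _; rewrite mulr1.
  move: h; rewrite /isR /nx.
  case: (next s u) => [a1|b1] /=; last by rewrite mulr0.
  by case: u {us'} => [c1|d1] //= _; rewrite mul1r.
have hc : forall j, \sum_(i < n) D i j = 0.
  move=> j; rewrite /D exchange_big /=.
  rewrite (eq_big_seq (fun u => (nx u == inr j)%:R - (u == inr j)%:R)).
    by rewrite sumrB sum_next // subrr.
  move=> u us'; rewrite sumrB -mulr_sumr -mulr_suml !sum_inl.
  have h := next_cycle cyc us'.
  congr (_ - _).
    move: h; rewrite /isL /nx.
    case: (next s u) => [a1|b1] /=; first by rewrite mulr0.
    by case: u {us'} => [c1|d1] //= _; rewrite mul1r.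
  case: u h {us'} => [i0|j0] h; first by rewrite /= mul0r.
  by move: h; rewrite /isL /nx; case: (next s (inr j0)) => [a1|b1] //= _; rewrite mulr1.
have supp : forall i j, D i j != 0 -> 0 < P i j.
  move=> i j; apply: contraNT => hP; rewrite /D big1_seq // => u; case/andP => _ us'.
  have h := next_cycle cyc us'.
  have t1 : ((u == inl i)%:R * (nx u == inr j)%:R : R) = 0.
    case: (eqVneq u (inl i)) => [Eu|_]; last by rewrite mul0r.
    case: (eqVneq (nx u) (inr j)) => [En|_]; last by rewrite mulr0.
    by move: h; rewrite -/nx En Eu /= (negbTE hP).
  have t2 : ((u == inr j)%:R * (nx u == inl i)%:R : R) = 0.
    case: (eqVneq u (inr j)) => [Eu|_]; last by rewrite mul0r.
    case: (eqVneq (nx u) (inl i)) => [En|_]; last by rewrite mulr0.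
    by move: h; rewrite -/nx En Eu /= (negbTE hP).
  by rewrite t1 t2 subrr.
have e01 : e x0 x1 by move: cyc; rewrite Es /= => /andP[].
have := us; rewrite Es /= => /and3P [nx0 nx1 _].
have x10 : x1 != x0 by apply/eqP => E; move: nx0; rewrite E inE eqxx.
have x20 : x2 != x0 by apply/eqP => E; move: nx0; rewrite E !inE eqxx orbT.
have n0 : nx x0 = x1 by rewrite /nx Es /next /= eqxx.
have n1 : nx x1 = x2 by rewrite /nx Es /next /= (negbTE x10) eqxx.
have rest : forall i j, \sum_(u <- x2 :: r) ((u == x0)%:R * (nx u == inr j)%:R
     - (u == x1)%:R * (nx u == inl i)%:R : R) = 0.
  move=> i j; rewrite big1_seq // => u; case/andP => _ uin.
  have ux0 : (u == x0) = false.
    by apply/eqP => E; move: nx0; rewrite -E inE uin orbT.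
  have ux1 : (u == x1) = false.
    by apply/eqP => E; move: nx1; rewrite -E uin.
  by rewrite ux0 ux1 !mul0r subrr.
have rest' : forall i j, \sum_(u <- x2 :: r) ((u == x1)%:R * (nx u == inr j)%:R
     - (u == x0)%:R * (nx u == inl i)%:R : R) = 0.
  move=> i j; rewrite big1_seq // => u; case/andP => _ uin.
  have ux0 : (u == x0) = false.
    by apply/eqP => E; move: nx0; rewrite -E inE uin orbT.
  have ux1 : (u == x1) = false.
    by apply/eqP => E; move: nx1; rewrite -E uin.
  by rewrite ux0 ux1 !mul0r subrr.
have [i0 [j0 Dnz]] : exists i j, D i j != 0.
  move: e01 rest rest'; case E0: x0 => [a|b]; case E1: x1 => [a'|b'] //= _ rs rs'.
    exists a, b'; rewrite /D Es 2!big_cons n0 n1 E0 E1 rs /= -E0 (negbTE x20) /=.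
    rewrite !eqxx !bR /= !(mul0r, mulr0, mul1r, mulr1, subr0, sub0r, addr0).
    exact: oner_neq0.
  exists a', b; rewrite /D Es 2!big_cons n0 n1 E0 E1 rs' /= -E0 (negbTE x20) /=.
  rewrite !eqxx !bR /= !(mul0r, mulr0, mul1r, mulr1, subr0, sub0r, addr0).
  by rewrite oppr_eq0 oner_neq0.
pose c (x : 'I_n * 'I_n) := if D x.1 x.2 == 0 then 1 else P x.1 x.2 / `|D x.1 x.2|.
pose eps := \big[mn/1]_x c x.
have epos : 0 < eps.
  rewrite /eps; apply: (@big_ind R (fun v => 0 < v)) => //.
  - by move=> x y hx hy; rewrite /mn; case: ifP.
  - move=> x _; rewrite /c; case: ifP => [_|/negbT hD] //.
    by apply: divr_gt0; [exact: supp | rewrite normr_gt0].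
have le_c : forall x, eps <= c x.
  by move=> x; apply: bigmn_le; rewrite mem_index_enum.
have bound : forall i j, `|eps * D i j| <= P i j.
  move=> i j; have [hD|hD] := eqVneq (D i j) 0.
    by rewrite hD mulr0 normr0 Pge0.
  have := le_c (i, j); rewrite /c /= (negbTE hD) ler_pdivlMr ?normr_gt0 //.
  by rewrite normrM gtr0_norm.
have nn : forall t, (forall i j, `|t * D i j| <= P i j) ->
    forall i j, 0 <= P i j + t * D i j.
  move=> t ht i j; have := ht i j; rewrite ler_norml => /andP[h _]; lra.
have bound' : forall i j, `|- eps * D i j| <= P i j.
  by move=> i j; rewrite mulNr normrN.
have cp := perturb_coupling hr hc (nn _ bound).
have cm := perturb_coupling hr hc (nn _ bound').
have l1 := SF_le cp.
have l2 := SF_le cm.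
have strict : 2 * SF P < SF (fun i j => P i j + eps * D i j)
                        + SF (fun i j => P i j + - eps * D i j).
  rewrite /SF mulr_sumr -big_split /=.
  rewrite (bigD1 (i0, j0)) //= [X in _ < X](bigD1 (i0, j0)) //=.
  apply: ltr_leD.
    rewrite mulNr; apply: F_mid; first exact: supp.
      exact: bound.
    by apply: mulf_neq0 => //; rewrite gt_eqF.
  apply: ler_sum => x _.
  have [ht|ht] := eqVneq (eps * D x.1 x.2) 0.
    rewrite mulNr ht subr0 addr0; lra.
  rewrite mulNr; apply/ltW/F_mid => //.
  apply: supp; apply: contra ht => /eqP ->; by rewrite mulr0.
move: strict l1 l2.
move: (SF P) (SF (fun i j : 'I_n => P i j + eps * D i j))
  (SF (fun i j : 'I_n => P i j + - eps * D i j)) => a b c'.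
clear; move=> h1 h2 h3; lra.
Qed.

End Main.

Lemma other_nb (T : finType) (r : rel T) x y0 : r x y0 ->
  #|[set y | r x y]| != 1%N -> exists y, (y != y0) && r x y.
Proof.
move=> h0 h1.
have hin : y0 \in [set y | r x y] by rewrite inE.
have := cardsD1 y0 [set y | r x y]; rewrite hin add1n => hc.
have : (0 < #|[set y | r x y] :\ y0|)%N.
  rewrite lt0n; apply: contra h1 => /eqP h; by rewrite hc h.
by case/card_gt0P => y; rewrite !inE => hy; exists y.
Qed.

Unset Implicit Arguments.

Theorem lemma2 (R : realType) (n : nat) (p q : 'I_n -> R)
  (P : 'I_n -> 'I_n -> R) :
  is_distr p -> is_distr q ->
  is_min_entropy_coupling p q P ->
  is_forest (coupling_graph P) /\
  (forall i j, 0 < P i j ->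
     (forall i' j', P i' j' <= P i j) ->
     is_leaf (coupling_graph P) (inl i) \/ is_leaf (coupling_graph P) (inr j)).
Proof.
move=> _ _ Pmin; split.
  move=> s s3; apply/negP; rewrite /ucycleb => /andP [cyc us].
  exact: (@forest_contra R n p q P Pmin s s3 cyc us).
move=> i j hij hmax.
have [hl|nl] := eqVneq #|[set y | coupling_graph P (inl i) y]| 1%N; first by left.
have [hr|nr] := eqVneq #|[set y | coupling_graph P (inr j) y]| 1%N; first by right.
exfalso.
have [y1 /andP [ny1 ey1]] := other_nb (y0 := inr j) hij nl.
have [y2 /andP [ny2 ey2]] := other_nb (y0 := inl i) hij nr.
case: y1 ny1 ey1 => [a|k] // ny1 ey1.
case: y2 ny2 ey2 => [m|b] // ny2 ey2.
have hk : k != j by apply: contraNneq ny1 => ->.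
have hm : m != i by apply: contraNneq ny2 => ->.
exact: (@leaf_contra R n p q P Pmin i j k m hk hm ey1 ey2 hmax).
Qed.
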